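(* Let $A,B,C$ be non-collinear points of the real affine plane. Let $A^{+},A^{-}$ be points on line $\overleftrightarrow{BC}$, let $B^{+},B^{-}$ be points on line $\overleftrightarrow{CA}$, and let $C^{+},C^{-}$ be points on line $\overleftrightarrow{AB}$, with $A^{+}\neq C$, $A^{-}\neq B$, $B^{+}\neq A$, $B^{-}\neq C$, $C^{+}\neq B$, $C^{-}\neq A$. Define the real numbers $$a^{+}=\frac{|BA^{+}|}{|A^{+}C|},\quad b^{+}=\frac{|CB^{+}|}{|B^{+}A|},\quad c^{+}=\frac{|AC^{+}|}{|C^{+}B|},\quad a^{-}=\frac{|CA^{-}|}{|A^{-}B|},\quad b^{-}=\frac{|AB^{-}|}{|B^{-}C|},\quad c^{-}=\frac{|BC^{-}|}{|C^{-}A|}.$$ Then (under these hypotheses $B^{+}\neq C^{-}$, $C^{+}\neq A^{-}$, $A^{+}\neq B^{-}$, so the lines below are well defined) the three lines $\overleftrightarrow{B^{+}C^{-}}$, $\overleftrightarrow{C^{+}A^{-}}$, $\overleftrightarrow{A^{+}B^{-}}$ pass through a common point of the projective plane (i.e. they are concurrent at a finite point, or are mutually parallel) if and only if $$a^{+}b^{+}c^{+}+a^{-}b^{-}c^{-}=1-a^{+}a^{-}-b^{+}b^{-}-c^{+}c^{-}.$$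
   Context: Segment lengths are signed: for distinct points $P,Q,R$ on one of the lines $\overleftrightarrow{AB}$, $\overleftrightarrow{BC}$, $\overleftrightarrow{CA}$, $|PQ|$ denotes the signed length, positive when $\overrightarrow{PQ}$ points in the direction of $\overrightarrow{AB}$, $\overrightarrow{BC}$, $\overrightarrow{CA}$ respectively; ratios $|PX|/|XQ|$ of collinear signed lengths are thus well-defined real numbers, with $|PP|/|PQ|=0$. Equivalently, e.g. $A^{+}=(B+a^{+}C)/(1+a^{+})$ and $A^{-}=(a^{-}B+C)/(1+a^{-})$ as vectors, and similarly for the other points. *)

(* Defs.v *)
(* points of the affine plane over an ordered field R
   (realFieldType; the statement is purely algebraic) are row vectors 'rV[R]_2. *)
From HB Require Import structures.
From mathcomp Require Import all_boot all_order all_algebra.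
Set Implicit Arguments. Unset Strict Implicit. Unset Printing Implicit Defensive.
Import Order.TTheory GRing.Theory Num.Theory.
Local Open Scope ring_scope.

Section Plane.
Variable R : realFieldType.
Definition point := 'rV[R]_2.

Definition cross (u v : point) : R := u 0 0 * v 0 1 - u 0 1 * v 0 0.

Definition on_line (P Q X : point) : Prop := cross (Q - P) (X - P) = 0.

Definition collinear (P Q X : point) : Prop := cross (Q - P) (X - P) = 0.

Definition parallel (P Q S T : point) : Prop := cross (Q - P) (T - S) = 0.

(* r is the signed ratio |PX|/|XQ| for collinear P, X, Q with X <> Q:
   vectorially X - P = r (Q - X), i.e. X = (P + r Q)/(1 + r). *)
Definition signed_ratio (P X Q : point) (r : R) : Prop := X - P = r *: (Q - X).

Definition proj_concurrent (P1 Q1 P2 Q2 P3 Q3 : point) : Prop :=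
  (exists X, [/\ on_line P1 Q1 X, on_line P2 Q2 X & on_line P3 Q3 X]) \/
  [/\ parallel P1 Q1 P2 Q2, parallel P2 Q2 P3 Q3 & parallel P1 Q1 P3 Q3].
End Plane.

(* Main.v *)
Require Import Defs.
From HB Require Import structures.
From mathcomp Require Import all_boot all_order all_algebra.
From mathcomp Require Import ring lra.
Import Order.TTheory GRing.Theory Num.Theory.
Local Open Scope ring_scope.

Section Aux.
Variable R : realFieldType.

Definition det3 (a1 b1 c1 a2 b2 c2 a3 b3 c3 : R) :=
  a1*(b2*c3-c2*b3) - b1*(a2*c3-c2*a3) + c1*(a2*b3-b2*a3).

Lemma pair_ex (a1 b1 c1 a2 b2 c2 a3 b3 c3 : R) :
  a1*b2 - b1*a2 != 0 -> det3 a1 b1 c1 a2 b2 c2 a3 b3 c3 = 0 ->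
  exists x y, [/\ x*a1+y*b1+c1=0, x*a2+y*b2+c2=0 & x*a3+y*b3+c3=0].
Proof.
move=> k0 hd.
exists ((b1*c2-c1*b2)/(a1*b2-b1*a2)), ((c1*a2-a1*c2)/(a1*b2-b1*a2)).
split; first by field.
  by field.
transitivity (det3 a1 b1 c1 a2 b2 c2 a3 b3 c3 / (a1*b2-b1*a2)).
  by rewrite /det3; field.
by rewrite hd mul0r.
Qed.

Lemma scal (a1 b1 c1 a2 b2 c2 a3 b3 c3 : R) :
  (a1 != 0) || (b1 != 0) ->
  ((exists x y, [/\ x*a1+y*b1+c1=0, x*a2+y*b2+c2=0 & x*a3+y*b3+c3=0]) \/
   [/\ a1*b2-b1*a2=0, a2*b3-b2*a3=0 & a1*b3-b1*a3=0]) <->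
  det3 a1 b1 c1 a2 b2 c2 a3 b3 c3 = 0.
Proof.
move=> nz; split.
  case=> [[x [y [e1 e2 e3]]]|[p12 p23 p13]].
    have -> : det3 a1 b1 c1 a2 b2 c2 a3 b3 c3 =
      (x*a1+y*b1+c1)*(a2*b3-b2*a3) - (x*a2+y*b2+c2)*(a1*b3-b1*a3)
      + (x*a3+y*b3+c3)*(a1*b2-b1*a2) by rewrite /det3; ring.
    by rewrite e1 e2 e3; ring.
  have h1 : det3 a1 b1 c1 a2 b2 c2 a3 b3 c3 * b1 =
     - (a1*b2-b1*a2)*(-(b1*c3-c1*b3)) - (a1*b3-b1*a3)*(b1*c2-c1*b2)
     by rewrite /det3; ring.
  have h2 : det3 a1 b1 c1 a2 b2 c2 a3 b3 c3 * a1 =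
     (a1*b2-b1*a2)*(a1*c3-c1*a3) + (a1*b3-b1*a3)*(-(a1*c2-c1*a2))
     by rewrite /det3; ring.
  rewrite p12 p13 in h1 h2.
  move/orP: nz => [nz|nz].
    have : det3 a1 b1 c1 a2 b2 c2 a3 b3 c3 * a1 == 0 by rewrite h2; apply/eqP; ring.
    by rewrite mulf_eq0 (negbTE nz) orbF => /eqP.
  have : det3 a1 b1 c1 a2 b2 c2 a3 b3 c3 * b1 == 0 by rewrite h1; apply/eqP; ring.
  by rewrite mulf_eq0 (negbTE nz) orbF => /eqP.
move=> hd.
have [p12|p12] := eqVneq (a1*b2-b1*a2) 0; last by left; exact: pair_ex.
have [p23|p23] := eqVneq (a2*b3-b2*a3) 0; last first.
  have hd' : det3 a2 b2 c2 a3 b3 c3 a1 b1 c1 = 0 by move: hd; rewrite /det3 => <-; ring.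
  left; have [x [y [e2 e3 e1]]] := @pair_ex a2 b2 c2 a3 b3 c3 a1 b1 c1 p23 hd'.
  by exists x, y.
have [p13|p13] := eqVneq (a1*b3-b1*a3) 0; first by right.
have hd' : det3 a1 b1 c1 a3 b3 c3 a2 b2 c2 = 0.
  by rewrite -oppr0 -hd /det3; ring.
left; have [x [y [e1 e3 e2]]] := @pair_ex a1 b1 c1 a3 b3 c3 a2 b2 c2 p13 hd'.
by exists x, y.
Qed.

Definition lx (P Q : point R) := P 0 1 - Q 0 1.
Definition ly (P Q : point R) := Q 0 0 - P 0 0.
Definition lz (P Q : point R) := P 0 0 * Q 0 1 - P 0 1 * Q 0 0.

Lemma on_lineE (P Q X : point R) :
  on_line P Q X <-> X 0 0 * lx P Q + X 0 1 * ly P Q + lz P Q = 0.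
Proof.
rewrite /on_line.
have -> : cross (Q - P) (X - P) = X 0 0 * lx P Q + X 0 1 * ly P Q + lz P Q.
  by rewrite /cross /lx /ly /lz !mxE; ring.
by [].
Qed.

Lemma parallelE (P Q S T : point R) :
  parallel P Q S T = (lx P Q * ly S T - ly P Q * lx S T = 0).
Proof.
rewrite /parallel; congr (_ = 0).
by rewrite /cross /lx /ly !mxE; ring.
Qed.

Lemma concE (P1 Q1 P2 Q2 P3 Q3 : point R) :
  (lx P1 Q1 != 0) || (ly P1 Q1 != 0) ->
  proj_concurrent P1 Q1 P2 Q2 P3 Q3 <->
  det3 (lx P1 Q1) (ly P1 Q1) (lz P1 Q1) (lx P2 Q2) (ly P2 Q2) (lz P2 Q2)
       (lx P3 Q3) (ly P3 Q3) (lz P3 Q3) = 0.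
Proof.
move=> nz; rewrite -scal //; rewrite /proj_concurrent !parallelE.
split; (case=> [h|h]; last by right).
  case: h => X [h1 h2 h3].
  left; exists (X 0 0), (X 0 1).
  by split; apply/on_lineE.
case: h => x [y [h1 h2 h3]]; left.
exists (\row_(j < 2) (if j == 0 then x else y)).
by split; apply/on_lineE; rewrite !mxE /=.
Qed.

Lemma sr_nz (P X Q : point R) r : signed_ratio P X Q r -> P != Q -> 1 + r != 0.
Proof.
move=> h nPQ; apply/eqP => e.
have er : r = -1 by apply/eqP; rewrite -subr_eq0 opprK addrC e.
move: h; rewrite /signed_ratio er scaleN1r opprB => /addrI /oppr_inj ePQ.
by rewrite ePQ eqxx in nPQ.
Qed.

Lemma sr_coord (P X Q : point R) r i :
  signed_ratio P X Q r -> 1 + r != 0 -> X 0 i = (P 0 i + r * Q 0 i)/(1+r).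
Proof.
move=> h nz; have := congr1 (fun M : point R => M 0 i) h; rewrite !mxE => e.
apply: (mulIf nz); rewrite mulfVK //.
have -> : X 0 i * (1 + r) = P 0 i + r * Q 0 i + ((X 0 i - P 0 i) - r * (Q 0 i - X 0 i)) by ring.
by rewrite e subrr addr0.
Qed.

End Aux.
Arguments lx {R}.
Arguments ly {R}.
Arguments lz {R}.
Arguments det3 {R}.
Arguments concE {R}.
Arguments sr_nz {R P X Q r}.
Arguments sr_coord {R P X Q r} i.

Theorem theorem3 (R : realFieldType)
  (A B C Ap Am Bp Bm Cp Cm : point R)
  (ap am bp bm cp cm : R) :
  ~ collinear A B C ->
  on_line B C Ap -> on_line B C Am ->
  on_line C A Bp -> on_line C A Bm ->
  on_line A B Cp -> on_line A B Cm ->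
  Ap <> C -> Am <> B -> Bp <> A -> Bm <> C -> Cp <> B -> Cm <> A ->
  signed_ratio B Ap C ap ->
  signed_ratio C Bp A bp ->
  signed_ratio A Cp B cp ->
  signed_ratio C Am B am ->
  signed_ratio A Bm C bm ->
  signed_ratio B Cm A cm ->
  (proj_concurrent Bp Cm Cp Am Ap Bm <->
   ap * bp * cp + am * bm * cm = 1 - ap * am - bp * bm - cp * cm).
Proof.
move=> ncol _ _ _ _ _ _ _ _ _ _ _ _ sAp sBp sCp sAm sBm sCm.
have d0 : cross (B - A) (C - A) != 0 by apply/eqP.
have nBC : B != C.
  by apply/negP => /eqP e; apply: ncol; rewrite /collinear e /cross; ring.
have nCA : C != A.
  by apply/negP => /eqP e; apply: ncol; rewrite /collinear e /cross !mxE; ring.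
have nAB : A != B.
  by apply/negP => /eqP e; apply: ncol; rewrite /collinear e /cross !mxE; ring.
have nap := sr_nz sAp nBC; have nbp := sr_nz sBp nCA; have ncp := sr_nz sCp nAB.
have nam := sr_nz sAm (contra_neq (@esym _ _ _) nBC).
have nbm := sr_nz sBm (contra_neq (@esym _ _ _) nCA).
have ncm := sr_nz sCm (contra_neq (@esym _ _ _) nAB).
move: d0; rewrite /cross !mxE => d0.
have [Ap0 Ap1] := (sr_coord 0 sAp nap, sr_coord 1 sAp nap).
have [Am0 Am1] := (sr_coord 0 sAm nam, sr_coord 1 sAm nam).
have [Bp0 Bp1] := (sr_coord 0 sBp nbp, sr_coord 1 sBp nbp).
have [Bm0 Bm1] := (sr_coord 0 sBm nbm, sr_coord 1 sBm nbm).
have [Cp0 Cp1] := (sr_coord 0 sCp ncp, sr_coord 1 sCp ncp).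
have [Cm0 Cm1] := (sr_coord 0 sCm ncm, sr_coord 1 sCm ncm).
rewrite concE; last first.
  have key : (ly Bp Cm * (B 0 1 - A 0 1) + lx Bp Cm * (B 0 0 - A 0 0)) * (1 + bp)
     = (B 0 0 - A 0 0) * (C 0 1 - A 0 1) - (B 0 1 - A 0 1) * (C 0 0 - A 0 0).
    by rewrite /lx /ly Bp0 Bp1 Cm0 Cm1; field; rewrite ?nap ?nam ?nbp ?nbm ?ncp ?ncm.
  apply: contraT => /norP [/negPn/eqP h1 /negPn/eqP h2].
  by move: key; rewrite h1 h2 !mul0r addr0 mul0r => /esym/eqP; rewrite (negbTE d0).
have key : det3 (lx Bp Cm) (ly Bp Cm) (lz Bp Cm) (lx Cp Am) (ly Cp Am) (lz Cp Am)
       (lx Ap Bm) (ly Ap Bm) (lz Ap Bm) * ((1+ap)*(1+am)*(1+bp)*(1+bm)*(1+cp)*(1+cm))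
   = ((B 0 0 - A 0 0) * (C 0 1 - A 0 1) - (B 0 1 - A 0 1) * (C 0 0 - A 0 0)) ^+ 2 *
     (-1 + am*ap + cm*cp + am*bm*cm + ap*bp*cp + bp*bm).
  by rewrite /det3 /lx /ly /lz Ap0 Ap1 Am0 Am1 Bp0 Bp1 Bm0 Bm1 Cp0 Cp1 Cm0 Cm1; field; rewrite ?nap ?nam ?nbp ?nbm ?ncp ?ncm.
have nprod : (1+ap)*(1+am)*(1+bp)*(1+bm)*(1+cp)*(1+cm) != 0 by rewrite !mulf_neq0.
split => h.
  move: key; rewrite h mul0r => /esym/eqP; rewrite mulf_eq0 expf_eq0 (negbTE d0) /= => /eqP e.
  by apply/eqP; rewrite -subr_eq0; apply/eqP; rewrite -e; ring.
apply/eqP; rewrite -(mulIr_eq0 _ (mulIf nprod)) key.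
have -> : -1 + am*ap + cm*cp + am*bm*cm + ap*bp*cp + bp*bm =
   (ap * bp * cp + am * bm * cm) - (1 - ap * am - bp * bm - cp * cm) by ring.
by rewrite h subrr mulr0.
Qed.
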